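(* Let $\gamma\in(0,2)$. Suppose $\boldsymbol{w}^k\in\mathbb{R}^{n+m}$, $\tilde{\boldsymbol{w}}^k=(\tilde{\boldsymbol{x}}^k,\tilde{\boldsymbol{\lambda}}^k)\in\Omega$, $r_k,s_k>0$ with $r_ks_k>\rho(\mathcal{D}\Phi(\tilde{\boldsymbol{x}}^k)\mathcal{D}\Phi(\tilde{\boldsymbol{x}}^k)^T)$, and that $$f(\boldsymbol{x})-f(\tilde{\boldsymbol{x}}^k)+(\boldsymbol{w}-\tilde{\boldsymbol{w}}^k)^T\{\boldsymbol{\Gamma}(\tilde{\boldsymbol{w}}^k)+\boldsymbol{\Sigma}_k(\tilde{\boldsymbol{w}}^k-\boldsymbol{w}^k)\}\ge 0\quad\forall\,\boldsymbol{w}=(\boldsymbol{x},\boldsymbol{\lambda})\in\Omega,$$ and let $\boldsymbol{w}^{k+1}=\boldsymbol{w}^k-\gamma(\boldsymbol{w}^k-\tilde{\boldsymbol{w}}^k)$. Then for every $\boldsymbol{w}^*\in\Omega^*$, $$\|\boldsymbol{w}^{k+1}-\boldsymbol{w}^*\|_{\boldsymbol{\Sigma}_k}^2\le\|\boldsymbol{w}^k-\boldsymbol{w}^*\|_{\boldsymbol{\Sigma}_k}^2-\gamma(2-\gamma)\|\tilde{\boldsymbol{w}}^k-\boldsymbol{w}^k\|_{\boldsymbol{\Sigma}_k}^2.$$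
   Context: Standing setting: $\mathcal{X}\subset\mathbb{R}^n$ nonempty closed convex; $f:\mathbb{R}^n\to\mathbb{R}$ convex (not necessarily differentiable); $\phi_1,\dots,\phi_m:\mathbb{R}^n\to\mathbb{R}$ convex and continuously differentiable; $\Phi(\boldsymbol{x})=(\phi_1(\boldsymbol{x}),\dots,\phi_m(\boldsymbol{x}))^T$ with $m\times n$ Jacobian $\mathcal{D}\Phi(\boldsymbol{x})$ (rows $\nabla\phi_i(\boldsymbol{x})^T$). The problem is $\min\{f(\boldsymbol{x})\mid \phi_i(\boldsymbol{x})\le0,\ i=1,\dots,m,\ \boldsymbol{x}\in\mathcal{X}\}$. $\mathcal{Z}=\mathbb{R}^m_+$, $\Omega=\mathcal{X}\times\mathcal{Z}$, $\boldsymbol{w}=(\boldsymbol{x},\boldsymbol{\lambda})$, $\boldsymbol{\Gamma}(\boldsymbol{w})=(\mathcal{D}\Phi(\boldsymbol{x})^T\boldsymbol{\lambda},\,-\Phi(\boldsymbol{x}))$. $\Omega^*$ is the (assumed nonempty) set of $\boldsymbol{w}^*=(\boldsymbol{x}^*,\boldsymbol{\lambda}^* )\in\Omega$ with $f(\boldsymbol{x})-f(\boldsymbol{x}^* )+(\boldsymbol{w}-\boldsymbol{w}^* )^T\boldsymbol{\Gamma}(\boldsymbol{w}^* )\ge0$ for all $\boldsymbol{w}\in\Omega$ (equivalently, saddle points of the Lagrangian $f(\boldsymbol{x})+\boldsymbol{\lambda}^T\Phi(\boldsymbol{x})$ over $\mathcal{X}\times\mathbb{R}^m_+$). The relaxed-PPA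 proximal matrix is the symmetric matrix $\boldsymbol{\Sigma}_k=\begin{pmatrix} r_k\boldsymbol{I}_n & -\mathcal{D}\Phi(\tilde{\boldsymbol{x}}^k)^T\\ -\mathcal{D}\Phi(\tilde{\boldsymbol{x}}^k) & s_k\boldsymbol{I}_m\end{pmatrix}$, and $\|\boldsymbol{v}\|_{\boldsymbol{H}}^2=\boldsymbol{v}^T\boldsymbol{H}\boldsymbol{v}$; $\rho(\cdot)$ is the spectral radius. The variational inequality in the hypothesis is what the customized PPA step produces: $\tilde{\boldsymbol{x}}^k\in\arg\min_{\boldsymbol{x}\in\mathcal{X}}\{f(\boldsymbol{x})+(\boldsymbol{\lambda}^k)^T\Phi(\boldsymbol{x})+\frac{r_k}{2}\|\boldsymbol{x}-\boldsymbol{x}^k\|^2\}$ and $\tilde{\boldsymbol{\lambda}}^k=P_{\mathbb{R}^m_+}\big(\boldsymbol{\lambda}^k+\frac1{s_k}[\Phi(\tilde{\boldsymbol{x}}^k)+\mathcal{D}\Phi(\tilde{\boldsymbol{x}}^k)(\tilde{\boldsymbol{x}}^k-\boldsymbol{x}^k)]\big)$ with $\boldsymbol{\lambda}^k\ge0$. *)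

(* Defs.v *)
From HB Require Import structures.
From mathcomp Require Import all_boot all_order all_algebra.
From mathcomp Require Import all_classical all_reals all_analysis.
From mathcomp Require Import complex.
Set Implicit Arguments. Unset Strict Implicit. Unset Printing Implicit Defensive.
Import Order.TTheory GRing.Theory Num.Theory.
Import numFieldNormedType.Exports.
Local Open Scope ring_scope.
Local Open Scope classical_set_scope.

Definition convex_fun (R : realType) (n : nat) (g : 'cV[R]_n -> R) : Prop :=
  forall x y (t : R), 0 <= t <= 1 ->
    g (t *: x + (1 - t) *: y) <= t * g x + (1 - t) * g y.

Definition nonneg_vec (R : realType) (m : nat) (l : 'cV[R]_m) : Prop :=
  forall i, 0 <= l i 0.

Definition PhiV (R : realType) (n m : nat) (phi : 'I_m -> 'cV[R]_n -> R)
  (x : 'cV[R]_n) : 'cV[R]_m := \col_i phi i x.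

Definition Gam (R : realType) (n m : nat) (phi : 'I_m -> 'cV[R]_n -> R)
  (DPhi : 'cV[R]_n -> 'M[R]_(m, n)) (x : 'cV[R]_n) (l : 'cV[R]_m)
  : 'cV[R]_(n + m) :=
  col_mx (trmx (DPhi x) *m l) (- PhiV phi x).

Definition Omega_star (R : realType) (n m : nat) (X : set 'cV[R]_n)
  (f : 'cV[R]_n -> R) (phi : 'I_m -> 'cV[R]_n -> R)
  (DPhi : 'cV[R]_n -> 'M[R]_(m, n)) (xs : 'cV[R]_n) (ls : 'cV[R]_m) : Prop :=
  X xs /\ nonneg_vec ls /\
  forall x l, X x -> nonneg_vec l ->
    0 <= f x - f xs +
         ((trmx (col_mx x l - col_mx xs ls) *m Gam phi DPhi xs ls) 0 0).

Definition SigmaMx (R : realType) (n m : nat) (r s : R) (J : 'M[R]_(m, n))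
  : 'M[R]_(n + m) :=
  block_mx (r%:M) (- trmx J) (- J) (s%:M).

Definition sqnormH (R : realType) (N : nat) (H : 'M[R]_N) (v : 'cV[R]_N) : R :=
  (trmx v *m H *m v) 0 0.

(* Spectral radius: sup of the moduli of the (complex) eigenvalues;
   sup of the empty set (m = 0) is 0 by the MathComp-Analysis convention. *)
Definition spectral_radius (R : realType) (m : nat) (A : 'M[R]_m) : R :=
  sup [set Normc.normc z | z in
         [set z : R[i] | eigenvalue (map_mx (fun a : R => a%:C%C) A) z]].

(* Main.v *)
Require Import Defs.
From HB Require Import structures.
From mathcomp Require Import all_boot all_order all_algebra.
From mathcomp Require Import all_classical all_reals all_analysis.
From mathcomp Require Import complex.
From mathcomp Require Import ring lra.
Import Order.TTheory GRing.Theory Num.Theory.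
Import numFieldNormedType.Exports.
Local Open Scope ring_scope.
Local Open Scope classical_set_scope.
Lemma grad_ineq (R : realType) (n : nat) (g : 'cV[R]_n -> R) x y :
  convex_fun g -> differentiable g x -> 'd g x (y - x) <= g y - g x.
Proof.
move=> cg dg; set v := y - x.
rewrite -deriveE //.
have dv : derivable g x v by exact: diff_derivable.
set q := (fun h : R => h^-1 *: ((g \o shift x) (h *: v) - g x)).
have cq : q @ 0^' --> 'D_v g x by exact: dv.
have cq' : q @ 0^'+ --> 'D_v g x.
  move=> A /cq /nbhs_ballP [e e0 eA]; exists e => //= z ze z0.
  by apply: eA => //; rewrite gt_eqF.
apply: (cvgr_to_le cq').
near=> h.
have h0 : 0 < h by near: h; exact: nbhs_right_gt.
have h1 : h <= 1 by near: h; apply: nbhs_right_ltW; exact: ltr01.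
rewrite /q /=.
have -> : h^-1 *: (g (h *: v + x) - g x) = (g (h *: v + x) - g x) / h by rewrite mulrC.
rewrite ler_pdivrMr //.
have E : h *: v + x = h *: y + (1 - h) *: x.
  by rewrite /v scalerBr scalerBl scale1r -addrA (addrC (- _)).
rewrite E.
have := cg y x h; rewrite h1 (ltW h0) /= => /(_ isT) H.
lra.
Unshelve. all: by end_near. Qed.


Section IP.
Variable R : realType.
Definition ip (N : nat) (a b : 'cV[R]_N) : R := (trmx a *m b) 0 0.
Arguments ip {N}.

Lemma ipE N (a b : 'cV[R]_N) : ip a b = \sum_i a i 0 * b i 0.
Proof. by rewrite /ip mxE; apply: eq_bigr => i _; rewrite mxE. Qed.
Lemma ipC N (a b : 'cV[R]_N) : ip a b = ip b a.
Proof. by rewrite !ipE; apply: eq_bigr => i _; rewrite mulrC. Qed.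
Lemma ipDr N (a b c : 'cV[R]_N) : ip a (b + c) = ip a b + ip a c.
Proof. by rewrite /ip mulmxDr mxE. Qed.
Lemma ipNr N (a b : 'cV[R]_N) : ip a (- b) = - ip a b.
Proof. by rewrite /ip mulmxN mxE. Qed.
Lemma ipBr N (a b c : 'cV[R]_N) : ip a (b - c) = ip a b - ip a c.
Proof. by rewrite ipDr ipNr. Qed.
Lemma ipZr N (a b : 'cV[R]_N) k : ip a (k *: b) = k * ip a b.
Proof. by rewrite /ip -scalemxAr mxE. Qed.
Lemma ipDl N (a b c : 'cV[R]_N) : ip (b + c) a = ip b a + ip c a.
Proof. by rewrite ipC ipDr ![ip a _]ipC. Qed.
Lemma ipNl N (a b : 'cV[R]_N) : ip (- b) a = - ip b a.
Proof. by rewrite ipC ipNr ipC. Qed.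
Lemma ipBl N (a b c : 'cV[R]_N) : ip (b - c) a = ip b a - ip c a.
Proof. by rewrite ipDl ipNl. Qed.
Lemma ipZl N (a b : 'cV[R]_N) k : ip (k *: b) a = k * ip b a.
Proof. by rewrite ipC ipZr ipC. Qed.
Lemma ip_mul M N (A : 'M[R]_(M, N)) a b : ip a (A *m b) = ip (trmx A *m a) b.
Proof. by rewrite /ip trmx_mul trmxK mulmxA. Qed.
Lemma ip_col M N (a c : 'cV[R]_M) (b d : 'cV[R]_N) :
  ip (col_mx a b) (col_mx c d) = ip a c + ip b d.
Proof. by rewrite /ip tr_col_mx mul_row_col mxE. Qed.
Lemma ip_ge0 N (a b : 'cV[R]_N) : (forall i, 0 <= a i 0) -> (forall i, 0 <= b i 0) -> 0 <= ip a b.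
Proof. by move=> ha hb; rewrite ipE; apply: sumr_ge0 => i _; apply: mulr_ge0. Qed.
End IP.
Arguments ip {R N}.

Lemma Sig_sym (R : realType) n m (r s : R) (J : 'M[R]_(m, n)) :
  trmx (SigmaMx r s J) = SigmaMx r s J.
Proof. by rewrite /SigmaMx tr_block_mx !tr_scalar_mx !linearN /= trmxK. Qed.

Lemma quad (R : realType) N (S : 'M[R]_N) (p d : 'cV[R]_N) c :
  trmx S = S ->
  ip (p + c *: d) (S *m (p + c *: d)) =
  ip p (S *m p) + 2 * c * ip p (S *m d) + c ^+ 2 * ip d (S *m d).
Proof.
move=> sS.
have E : ip d (S *m p) = ip p (S *m d) by rewrite ip_mul sS ipC.
rewrite mulmxDr -scalemxAr !(ipDl, ipDr, ipZl, ipZr) E; ring.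
Qed.

Lemma grad_entry (R : realType) n m (phi : 'I_m -> 'cV[R]_n -> R)
  (DPhi : 'cV[R]_n -> 'M[R]_(m, n)) :
  (forall i, convex_fun (phi i)) ->
  (forall i x, differentiable (phi i) x /\
     forall v, 'd (phi i) x v = \sum_(j < n) DPhi x i j * v j 0) ->
  forall i x y, (DPhi x *m (y - x)) i 0 <= phi i y - phi i x.
Proof.
move=> cv dif i x y; have [dx dE] := dif i x.
have := @grad_ineq _ _ _ x y (cv i) dx; rewrite dE.
by rewrite mxE.
Qed.

Theorem theorem1 (R : realType) (n m : nat)
  (X : set 'cV[R]_n) (f : 'cV[R]_n -> R)
  (phi : 'I_m -> 'cV[R]_n -> R) (DPhi : 'cV[R]_n -> 'M[R]_(m, n))
  (gamma r s : R) (xk xt : 'cV[R]_n) (lk lt : 'cV[R]_m) :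
  (* standing setting *)
  X !=set0 -> closed X -> convex_set X ->
  convex_fun f ->
  (forall i, convex_fun (phi i)) ->
  (forall i x, differentiable (phi i) x /\
     forall v, 'd (phi i) x v = \sum_(j < n) DPhi x i j * v j 0) ->
  continuous DPhi ->
  (* hypotheses of the theorem *)
  0 < gamma < 2 ->
  X xt -> nonneg_vec lt ->
  0 < r -> 0 < s ->
  spectral_radius (DPhi xt *m trmx (DPhi xt)) < r * s ->
  (forall x l, X x -> nonneg_vec l ->
     0 <= f x - f xt +
       ((trmx (col_mx x l - col_mx xt lt) *m
          (Gam phi DPhi xt lt +
           SigmaMx r s (DPhi xt) *m (col_mx xt lt - col_mx xk lk))) 0 0)) ->
  forall xs ls, Omega_star X f phi DPhi xs ls ->
  let wk := col_mx xk lk in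
  let wt := col_mx xt lt in
  let ws := col_mx xs ls in
  let wk1 := wk - gamma *: (wk - wt) in
  let Sig := SigmaMx r s (DPhi xt) in
  sqnormH Sig (wk1 - ws) <=
    sqnormH Sig (wk - ws) - gamma * (2 - gamma) * sqnormH Sig (wt - wk).
Proof.
move=> _ _ _ _ cvphi dphi _ /andP[g0 g2] Xt nlt _ _ _ VI xs ls [Xs [nls OS]].
cbv zeta.
set wk := col_mx xk lk; set wt := col_mx xt lt; set ws := col_mx xs ls.
set wk1 := wk - gamma *: (wk - wt); set Sig := SigmaMx r s (DPhi xt).
have sqE : forall v, sqnormH Sig v = ip v (Sig *m v).
  by move=> v; rewrite /sqnormH /ip mulmxA.
have sS : trmx Sig = Sig by apply: Sig_sym.
set p := wt - ws; set d := wt - wk.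
have E1 : wk1 - ws = p + (gamma - 1) *: d.
  by apply/matrixP => i j; rewrite /wk1 /p /d !mxE; ring.
have E2 : wk - ws = p + (-1) *: d.
  by apply/matrixP => i j; rewrite /p /d !mxE; ring.
have E3 : wt - wk = 0 + 1 *: d by rewrite add0r scale1r.
pose B := ip p (Sig *m d).
have Ble : B <= 0.
  have H1 : 0 <= f xs - f xt + ip (ws - wt) (Gam phi DPhi xt lt + Sig *m d).
    exact: VI xs ls Xs nls.
  have H2 : 0 <= f xt - f xs + ip (wt - ws) (Gam phi DPhi xs ls).
    exact: OS xt lt Xt nlt.
  have Ewsp : ws - wt = - p by rewrite /p opprB.
  rewrite Ewsp ipNl ipDr -/p -/B in H1.
  have pE : p = col_mx (xt - xs) (lt - ls) by rewrite /p /wt /ws opp_col_mx add_col_mx.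
  rewrite -/p pE /Gam !ip_col !ip_mul !trmxK in H1 H2.
  set Jt := DPhi xt in H1 H2 *; set Js := DPhi xs in H1 H2 *.
  have e1 : 0 <= ip lt (PhiV phi xs - PhiV phi xt + Jt *m (xt - xs)).
    apply: ip_ge0 => // i; rewrite !mxE.
    have := @grad_entry _ _ _ phi DPhi cvphi dphi i xt xs.
    rewrite -/Jt -opprB mulmxN !mxE; lra.
  have e2 : 0 <= ip ls (PhiV phi xt - PhiV phi xs - Js *m (xt - xs)).
    apply: ip_ge0 => // i; rewrite !mxE.
    have := @grad_entry _ _ _ phi DPhi cvphi dphi i xs xt.
    rewrite -/Js !mxE; lra.
  rewrite !(ipDr, ipBr, ipNr) in e1 e2.
  rewrite !(ipDl, ipBl, ipNl, ipNr) in H1 H2.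
  rewrite ![ip (Jt *m _) _]ipC ![ip (Js *m _) _]ipC in H1 H2.
  lra.
rewrite !sqE E1 E2 !quad // -/B.
nra.
Qed.
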